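(* Let $V=\{1,\dots,n\}$ and let $F:2^V\to\mathbb{R}$ be a non-negative submodular set function with $F(\emptyset)=F(V)=0$. Define a directed graph $G=(V,E,c)$ with $E=\{(u,v)\in V\times V:u\neq v\}$ and $c_{uv}=\min\{F(A):A\subseteq V,\ u\in A,\ v\notin A\}$. Then for every $A\subseteq V$, \[\frac{1}{n^2/4}\,c^+(A)\le F(A)\le c^+(A).\] Moreover, if $F(A)\in\Delta\cdot\mathbb{Z}_{\ge0}$ for all $A$ for some $\Delta>0$, then every $c_{uv}$ is an integer multiple of $\Delta$.
   Context: For a weighted directed graph $(V,E,c)$, the cut function is $c^+(A)=\sum_{(u,v)\in E:\,u\in A,\,v\notin A}c_{uv}$ for $A\subseteq V$. *)

(* Defs.v *)
(* V = {1..n} is modelled as 'I_n. *)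
From mathcomp Require Import all_boot all_order all_algebra.
Set Implicit Arguments. Unset Strict Implicit. Unset Printing Implicit Defensive.
Import Order.TTheory GRing.Theory Num.Theory.
Local Open Scope ring_scope.

Definition submodular (R : realFieldType) (n : nat) (F : {set 'I_n} -> R) : Prop :=
  forall A B : {set 'I_n}, F (A :|: B) + F (A :&: B) <= F A + F B.

(* For u != v the family is nonempty
   and contains [set u], so using F [set u] as the neutral element of the
   min-fold does not change the value.  (For u = v there is no edge and the
   value is irrelevant.) *)
Definition cap (R : realFieldType) (n : nat) (F : {set 'I_n} -> R) (u v : 'I_n) : R :=
  \big[Num.min/F [set u]]_(A : {set 'I_n} | (u \in A) && (v \notin A)) F A.

Definition cut_out (R : realFieldType) (n : nat) (c : 'I_n -> 'I_n -> R)
  (A : {set 'I_n}) : R :=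
  \sum_(u in A) \sum_(v in ~: A) c u v.

(* Main.v *)
Require Import Defs.
From mathcomp Require Import all_boot all_order all_algebra.
From mathcomp Require Import lra.
Import Order.TTheory GRing.Theory Num.Theory.
Local Open Scope ring_scope.

Section Aux.
Variables (R : realFieldType) (n : nat) (F : {set 'I_n} -> R).
Hypotheses (F_ge0 : forall A, 0 <= F A) (F_sub : submodular F)
  (F0 : F set0 = 0) (FV : F setT = 0).

Definition Bm (u v : 'I_n) : {set 'I_n} :=
  Order.arg_min [set u] (fun i => (u \in i) && (v \notin i)) F.

Lemma Bm_spec u v : u != v ->
  [/\ u \in Bm u v, v \notin Bm u v & cap F u v = F (Bm u v)].
Proof.
move=> uv.
have P0 : (u \in [set u]) && (v \notin [set u]).
  by rewrite set11 in_set1 eq_sym.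
rewrite /Bm; case: Order.TotalTheory.arg_minP => // B /andP[uB vB] Bmin.
split => //; apply/le_anti/andP; split.
  by apply: bigmin_le_cond; rewrite uB vB.
apply/bigmin_geP; split; first by apply: Bmin.
by move=> i Pi; apply: Bmin.
Qed.

Lemma FU X Y : F (X :|: Y) <= F X + F Y.
Proof. have := F_sub X Y; have := F_ge0 (X :&: Y); lra. Qed.

Lemma FI X Y : F (X :&: Y) <= F X + F Y.
Proof. have := F_sub X Y; have := F_ge0 (X :|: Y); lra. Qed.

Lemma FbigU (S : {set 'I_n}) (X : 'I_n -> {set 'I_n}) :
  F (\bigcup_(i in S) X i) <= \sum_(i in S) F (X i).
Proof.
apply: (big_ind2 (fun U s => F U <= s)); first by rewrite F0.
  by move=> x1 x2 y1 y2 h1 h2; apply: le_trans (FU _ _) _; apply: lerD.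
by [].
Qed.

Lemma FbigI (S : {set 'I_n}) (X : 'I_n -> {set 'I_n}) :
  F (\bigcap_(i in S) X i) <= \sum_(i in S) F (X i).
Proof.
apply: (big_ind2 (fun U s => F U <= s)); first by rewrite FV.
  by move=> x1 x2 y1 y2 h1 h2; apply: le_trans (FI _ _) _; apply: lerD.
by [].
Qed.

Lemma decompA (A : {set 'I_n}) :
  A = \bigcup_(u in A) \bigcap_(v in ~: A) Bm u v.
Proof.
apply/setP => x; apply/idP/idP.
  move=> xA; apply/bigcupP; exists x => //; apply/bigcapP => v.
  rewrite in_setC => vA.
  have xv : x != v by apply: contraNneq vA => <-.
  by case: (Bm_spec _ _ xv).
case/bigcupP => u uA /bigcapP H; apply/negPn/negP => xA.
have ux : u != x by apply: contraNneq xA => <-.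
have := H x; rewrite in_setC xA => /(_ isT).
by case: (Bm_spec _ _ ux) => _ /negbTE ->.
Qed.

End Aux.

Theorem mainTheorem7 (R : realFieldType) (n : nat) (F : {set 'I_n} -> R)
  (F_ge0 : forall A, 0 <= F A) (F_sub : submodular F)
  (F0 : F set0 = 0) (FV : F setT = 0) :
  (forall A : {set 'I_n},
     1 / (n%:R ^+ 2 / 4) * cut_out (cap F) A <= F A /\ F A <= cut_out (cap F) A)
  /\
  (forall Delta : R, 0 < Delta ->
     (forall A : {set 'I_n}, exists k : nat, F A = k%:R * Delta) ->
     forall u v : 'I_n, u != v -> exists k : int, cap F u v = k%:~R * Delta).
Proof.
split; last first.
  move=> D _ HD u v uv; case: (@Bm_spec R n F _ _ uv) => _ _ ->.
  by case: (HD (Bm R n F u v)) => k ->; exists k.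
move=> A; split.
  have cutle : cut_out (cap F) A <= (#|A| * #|~: A|)%:R * F A.
    rewrite /cut_out.
    apply: le_trans (_ : \sum_(u in A) \sum_(v in ~: A) F A <= _).
      apply: ler_sum => u uA; apply: ler_sum => v vA.
      by apply: bigmin_le_cond; rewrite uA -in_setC vA.
    by rewrite !sumr_const -mulrnA mulr_natl mulnC.
  have cge0 : 0 <= 1 / (n%:R ^+ 2 / 4 : R).
    by rewrite divr_ge0 // divr_ge0 // exprn_ge0.
  have ckm : 1 / (n%:R ^+ 2 / 4 : R) * (#|A| * #|~: A|)%:R <= 1.
    have hn : (#|A| + #|~: A|)%N = n by rewrite cardsC card_ord.
    case: (posnP n) => [n0|npos].
      have -> : (n%:R : R) = 0 by rewrite n0.
      by rewrite expr0n /= mul0r invr0 mulr0 mul0r.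
    have np : 0 < (n%:R ^+ 2 / 4 : R).
      by rewrite divr_gt0 // exprn_gt0 // ltr0n.
    rewrite mulrC mulrA mulr1 ler_pdivrMr // mul1r.
    have -> : (n%:R : R) = #|A|%:R + #|~: A|%:R by rewrite -natrD hn.
    rewrite natrM.
    set k := (#|A|%:R : R); set m := (#|~: A|%:R : R).
    have := sqr_ge0 (k - m); rewrite !expr2; lra.
  apply: le_trans (ler_wpM2l cge0 cutle) _.
  rewrite mulrA; apply: le_trans (ler_wpM2r (F_ge0 A) ckm) _.
  by rewrite mul1r.
rewrite {1}(@decompA R n F A) /cut_out.
have HU := @FbigU R n F F_ge0 F_sub F0 A (fun u => \bigcap_(v in ~: A) Bm R n F u v).
apply: (le_trans HU); apply: ler_sum => u uA.
have HI := @FbigI R n F F_ge0 F_sub FV (~: A) (fun v => Bm R n F u v).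
apply: (le_trans HI); apply: ler_sum => v vA.
have uv : u != v by apply: contraTneq vA => <-; rewrite in_setC uA.
by case: (@Bm_spec R n F _ _ uv) => _ _ ->.
Qed.
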